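(* Let $A$ be a DFA over a finite alphabet $\Sigma$ and let $S=s_1,\ldots,s_l$ be a finite sequence of strings in $\Sigma^*$. In any execution of the prefix-free IDS algorithm on $S$ with teacher $A$, for each $t\geq 0$ the hypothesis automaton $M_t$ constructed by the construction procedure after $t$ input strings have been observed is a well-defined DFA; in particular its transition function is a well-defined function assigning a unique next state to every state $E_i(\alpha)$, $\alpha\in T_k$, and every input $b\in\Sigma$.
   Context: Let $A=\langle\Sigma,Q,F,q_0,\delta\rangle$ be a deterministic finite automaton (DFA) with finite input alphabet $\Sigma$, accepted language $L(A)\subseteq\Sigma^*$, and let $\lambda$ denote the empty string. A membership query asks whether a string lies in $L(A)$ and is answered correctly. Let $d_0$ be a fresh symbol not in $\Sigma^*$ and define $f:(\Sigma^*\cup\{d_0\})\times\Sigma\to\Sigma^*\cup\{d_0\}$ by $f(d_0,b)=d_0$ and $f(\alpha,b)=\alpha b$ for $\alpha\in\Sigma^*$. For sets $U,V$, $U\oplus V=(U-V)\cup(V-U)$. Prefix-free IDS algorithm (input: a sequence $S=s_1,\ldots,s_l$ of strings in $\Sigma^*$). It maintains integers $i,k,t$, distinguishing strings $v_0,\ldots,v_i$, sets $P_k\subseteq\Sigma^*$, $P'_k=P_k\cup\{d_0\}$, $T_k\subseteq\Sigma^*$, and for each $\alpha\in T_k$ a set $E_i(\alpha)\subseteq\{v_0,\ldots,v_i\}$; always $E_i(d_0)=\emptyset$. Refinement procedure (for current $k$): while there exist $\alpha,\beta\in P'_k$ and $b\in\Sigma$ with $E_i(\alpha)=E_i(\beta)$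 but $E_i(f(\alpha,b))\neq E_i(f(\beta,b))$: choose (nondeterministically) such $\alpha,\beta,b$ and some $\gamma\in E_i(f(\alpha,b))\oplus E_i(f(\beta,b))$, set $v_{i+1}=b\gamma$, increase $i$ by one, and for each $\alpha'\in T_k$ set $E_i(\alpha')=E_{i-1}(\alpha')\cup\{v_i\}$ if $\alpha' v_i\in L(A)$ and $E_i(\alpha')=E_{i-1}(\alpha')$ otherwise. Construction procedure (producing $M_t$): the states are the sets $E_i(\alpha)$, $\alpha\in T_k$; the initial state is $E_i(\lambda)$; the accepting states are those $E_i(\alpha)$ ($\alpha\in T_k$) with $\lambda\in E_i(\alpha)$; transitions: for each $\alpha\in P'_k$, if $E_i(\alpha)=\emptyset$ then $\delta(E_i(\alpha),b)=E_i(\alpha)$ for all $b\in\Sigma$, else $\delta(E_i(\alpha),b)=E_i(f(\alpha,b))$ for all $b\in\Sigma$; for each $\beta\in T_k-P'_k$ such that $E_i(\beta)\neq E_i(\alpha)$ for all $\alpha\in P'_k$ and $E_i(\beta)\neq\emptyset$, set $\delta(E_i(\beta),b)=\emptyset$ for all $b\in\Sigma$. Main algorithm: initialize $i=k=t=0$, $v_0=\lambda$, $P_0=\{\lambda\}$, $T_0=\{\lambda\}\cup\Sigma$, and for $\alpha\in T_0$ let $E_0(\alpha)=\{\lambda\}$ if $\alpha\in L(A)$, else $\emptyset$; run the refinement procedure, then the construction procedure, giving $M_0$. Then for each string $\alpha$ of $S$ in order: increase $k$ and $t$ by one; $P_k=P_{k-1}\cup\{\alpha\}$; $T_k=T_{k-1}\cup\{\alpha\}\cup\{\alpha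 b: b\in\Sigma\}$; for each $\beta\in T_k-T_{k-1}$ set $E_i(\beta)=\{v_j: 0\le j\le i,\ \beta v_j\in L(A)\}$; run the refinement procedure; if $M_{t-1}$ accepts $\alpha$ exactly when $\alpha\in L(A)$ then $M_t=M_{t-1}$, else $M_t$ is produced by the construction procedure. The algorithm stops when $S$ is exhausted. *)

(* Defs.v *)
From mathcomp Require Import all_boot.
Set Implicit Arguments. Unset Strict Implicit. Unset Printing Implicit Defensive.

Record dfa (Sigma : finType) := DFA {
  dstate : finType;
  dinit : dstate;
  dfinal : pred dstate;
  dtrans : dstate -> Sigma -> dstate }.

Definition dfa_accept (Sigma : finType) (A : dfa Sigma) (w : seq Sigma) : bool :=
  @dfinal Sigma A (foldl (@dtrans Sigma A) (@dinit Sigma A) w).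

Section IDS.
Variables (Sigma : finType) (A : dfa Sigma).
Local Notation word := (seq Sigma).
Local Notation L w := (dfa_accept A w).

(* Sigma^* extended with the fresh symbol d0, encoded as [None]. *)
Definition fext (a : option word) (b : Sigma) : option word :=
  if a is Some w then Some (rcons w b) else None.

(* A configuration of the algorithm: the distinguishing strings v_0..v_i
   (in order), the sets P_k and T_k, and the sets E_i(alpha) (as lists of
   strings, compared as sets with =i; only meaningful for alpha in T_k). *)
Record cfg := Cfg {
  vs : seq word;
  Pk : seq word;
  Tk : seq word;
  Ek : word -> seq word }.

Definition Eo (c : cfg) (a : option word) : seq word :=
  if a is Some w then Ek c w else [::].

Definition inP' (c : cfg) (a : option word) : bool :=
  if a is Some w then w \in Pk c else true.
Definition inT' (c : cfg) (a : option word) : bool :=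
  if a is Some w then w \in Tk c else true.

(* one iteration of the while loop of the refinement procedure,
   adding v_{i+1} = v and updating E for every alpha' in T_k *)
Definition refine_update (c : cfg) (v : word) : cfg :=
  Cfg (rcons (vs c) v) (Pk c) (Tk c)
      (fun a => if (a \in Tk c) && L (a ++ v) then rcons (Ek c a) v else Ek c a).

Definition refine_step (c c' : cfg) : Prop :=
  exists (a b : option word) (x : Sigma) (g : word),
    [/\ inP' c a /\ inP' c b, Eo c a =i Eo c b,
        ~ (Eo c (fext a x) =i Eo c (fext b x)),
        (g \in Eo c (fext a x)) (+) (g \in Eo c (fext b x))
      & c' = refine_update c (x :: g)].

Definition refine_done (c : cfg) : Prop :=
  forall (a b : option word) (x : Sigma), inP' c a -> inP' c b ->
    Eo c a =i Eo c b -> Eo c (fext a x) =i Eo c (fext b x).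

Inductive refines : cfg -> cfg -> Prop :=
  | ref_done c : refine_done c -> refines c c
  | ref_step c c1 c' : refine_step c c1 -> refines c1 c' -> refines c c'.

Definition init_cfg : cfg :=
  Cfg [:: [::]] [:: [::]] ([::] :: [seq [:: b] | b <- enum Sigma])
      (fun a => if L a then [:: [::]] else [::]).

Definition add_string (c : cfg) (al : word) : cfg :=
  Cfg (vs c) (rcons (Pk c) al) (Tk c ++ al :: [seq rcons al b | b <- enum Sigma])
      (fun be => if be \in Tk c then Ek c be else [seq v <- vs c | L (be ++ v)]).

Inductive run_from : cfg -> seq word -> seq cfg -> Prop :=
  | run_nil c : run_from c [::] [::]
  | run_cons c al S c' cs :
      refines (add_string c al) c' -> run_from c' S cs -> run_from c (al :: S) (c' :: cs).

(* an execution of the algorithm on S; the t-th element of cs (t = 0..l) is the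
   configuration from which the construction procedure builds M_t. *)
Definition ids_execution (S : seq word) (cs : seq cfg) : Prop :=
  exists c0 cs', [/\ refines init_cfg c0, run_from c0 S cs' & cs = c0 :: cs'].

(* States of the hypothesis: the sets E_i(alpha), alpha in T_k, together with
   the empty set E_i(d0) (the target of the "dead" transitions). *)
Definition is_state (c : cfg) (s : seq word) : Prop :=
  exists a : option word, inT' c a /\ s =i Eo c a.

(* the transition assignments made by the construction procedure:
   assign c s x s'  means the procedure sets delta(s, x) = s'. *)
Definition assign (c : cfg) (s : seq word) (x : Sigma) (s' : seq word) : Prop :=
  (exists a : option word,
     [/\ inP' c a, s =i Eo c a &
         (if nilp (Eo c a) then s' =i Eo c a else s' =i Eo c (fext a x))])
  \/
  (exists be : word,
     [/\ be \in Tk c /\ be \notin Pk c, s =i Ek c be,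
         (forall a, inP' c a -> ~ (Ek c be =i Eo c a)),
         ~~ nilp (Ek c be) & s' =i [::]]).

Definition construction_wd (c : cfg) : Prop :=
  is_state c (Ek c [::]) /\
  forall (s : seq word) (x : Sigma), is_state c s ->
    (exists s', assign c s x s' /\ is_state c s') /\
    (forall s1 s2, assign c s x s1 -> assign c s x s2 -> s1 =i s2).

End IDS.

(* Main.v *)
Require Import Defs.
From mathcomp Require Import all_boot.
From Stdlib Require Import Classical.
Set Implicit Arguments. Unset Strict Implicit. Unset Printing Implicit Defensive.

Section Pf.
Variable Sigma : finType.

Definition Inv (c : cfg Sigma) : Prop :=
  [::] \in Tk c /\ forall w b, w \in Pk c -> rcons w b \in Tk c.

Lemma refines_inv (A : dfa Sigma) c c' : refines A c c' -> Inv c -> Inv c' /\ refine_done c'.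
Proof.
elim=> [c0 Hd Hi | c0 c1 c2 [a [b [x [g [_ _ _ _ ->]]]]] _ IH Hi]; first by [].
by apply: IH.
Qed.

Lemma run_inv (A : dfa Sigma) c S cs : run_from A c S cs -> Inv c ->
  forall t, t < size cs -> forall d, Inv (nth d cs t) /\ refine_done (nth d cs t).
Proof.
elim=> [c0 | c0 al S0 c' cs0 Hr _ IH] Hi t //= Ht d.
have Hi' : Inv (add_string A c0 al).
  case: Hi => H0 HP; split => /=.
    by rewrite mem_cat H0.
  move=> w b; rewrite mem_rcons inE mem_cat => /orP [/eqP -> | /HP ->]; last by [].
  apply/orP; right; rewrite inE; apply/orP; right.
  by apply/mapP; exists b; rewrite ?mem_enum.
have [Hc Hd] := refines_inv Hr Hi'.
case: t Ht => [|t] Ht /=; first by [].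
by apply: IH.
Qed.

Lemma wd c : Inv c -> refine_done c -> construction_wd c.
Proof.
move=> [H0 HP] Hd; split.
  by exists (Some [::]).
move=> s x [a [HaT Hsa]]; split.
-
  have Hfirst : forall a', inP' c a' -> s =i Eo c a' ->
      exists s', assign c s x s' /\ is_state c s'.
    move=> a' Ha' Hs'.
    case Hn: (nilp (Eo c a')).
      exists (Eo c a'); split; first by left; exists a'; rewrite Hn.
      exists None; split => //. move: Hn; rewrite /nilp size_eq0 => /eqP -> //.
    exists (Eo c (fext a' x)); split; first by left; exists a'; rewrite Hn.
    exists (fext a' x); split => //.
    by case: a' Ha' {Hs' Hn} => [w|] //= /HP ->.
  case: a HaT Hsa => [be|] HaT Hsa; last by apply: (Hfirst None).
  case Hbp: (be \in Pk c); first by apply: (Hfirst (Some be)).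
  case: (classic (exists a', inP' c a' /\ Ek c be =i Eo c a')) => [[a' [Ha' He]]|Hno].
    apply: (Hfirst a') => //= y; by rewrite Hsa He.
  case Hn: (nilp (Ek c be)).
    apply: (Hfirst None) => //= y; rewrite Hsa /=.
    by move: Hn; rewrite /nilp size_eq0 => /eqP; rewrite /= => <-.
  exists [::]; split; last by exists None.
  right; exists be; split => //; first by rewrite Hbp.
  + move=> a2 Ha2 He; apply: Hno; by exists a2.
  + by rewrite Hn.
-
  have nilE : forall (u v : seq (seq Sigma)), u =i v -> nilp u = nilp v.
    move=> u v Huv; rewrite /nilp !size_eq0.
    case: u Huv => [|p u] Huv; case: v Huv => [|q v] Huv //.
      by have := Huv q; rewrite inE eqxx.
    by have := Huv p; rewrite inE eqxx.
  move=> s1 s2 [[a1 [H1 Hs1 Ht1]] | [b1 [[Hb1 _] Hs1 Hno1 Hn1 He1]]]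
                [[a2 [H2 Hs2 Ht2]] | [b2 [[Hb2 _] Hs2 Hno2 Hn2 He2]]].
  + have E12 : Eo c a1 =i Eo c a2 by move=> y; rewrite -Hs1 Hs2.
    have := nilE _ _ E12; case: (nilp (Eo c a1)) Ht1 => Ht1 Hn2';
      rewrite -Hn2' in Ht2.
      by move=> y; rewrite Ht1 Ht2 E12.
    by move=> y; rewrite Ht1 Ht2 (Hd _ _ x H1 H2 E12).
  + exfalso; apply: (Hno2 a1 H1) => y; by rewrite -Hs2 Hs1.
  + exfalso; apply: (Hno1 a2 H2) => y; by rewrite -Hs1 Hs2.
  + by move=> y; rewrite He1 He2.
Qed.

End Pf.

Theorem mainTheorem1 (Sigma : finType) (A : dfa Sigma) (S : seq (seq Sigma))
    (cs : seq (cfg Sigma)) :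
  ids_execution A S cs ->
  forall t : nat, t < size cs -> construction_wd (nth (init_cfg A) cs t).
Proof.
move=> [c0 [cs' [Hr Hrun ->]]] t Ht.
have Hi0 : Inv (init_cfg A).
  split => /=; first by rewrite inE eqxx.
  move=> w b; rewrite inE => /eqP -> /=.
  rewrite inE; apply/orP; right; apply/mapP; exists b; by rewrite ?mem_enum.
have [Hi Hd] := refines_inv Hr Hi0.
case: t Ht => [|t] Ht /=; first exact: wd.
have [Hi' Hd'] := run_inv Hrun Hi Ht (init_cfg A).
exact: wd.
Qed.
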